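(* For all $\bar s\in\mathbb{R}^{mn}$, $$\bar s^T\bar f(\bar s)\ \ge\ 2\,\bar f(\bar s)^T\bar f(\bar s)\ \ge\ 0 .$$
   Context: Let $n\ge1$, $m\ge2$. For $s\in\mathbb{R}^{mn}$ write $s=(s_{11},\dots,s_{1m},\dots,s_{n1},\dots,s_{nm})^T$. Define $f:\mathbb{R}^{mn}\to\mathbb{R}^{mn}$ by $f_{ij}(s)=e^{s_{ij}}/\sum_{l=1}^m e^{s_{il}}$ and $\bar f(s)=f(s)-\frac1m\mathbf 1_{mn}$, where $\mathbf 1_{mn}$ is the all-ones vector. *)

(* Defs.v *)
From mathcomp Require Import all_boot all_order all_algebra.
From mathcomp Require Import all_classical all_reals all_analysis.
Set Implicit Arguments. Unset Strict Implicit. Unset Printing Implicit Defensive.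
Import Order.TTheory GRing.Theory Num.Theory.
Local Open Scope ring_scope.

(* A vector s in R^{mn} is a row vector 'rV_(n*m); its entry s_{ij}
   (i-th block of size m, j-th entry in the block) sits at index
   (i-1)*m + j, i.e. it is (vec_mx s) i j  (mxvec is row-major). *)

Definition blocksoftmax (R : realType) (n m : nat) (s : 'rV[R]_(n * m))
  : 'rV[R]_(n * m) :=
  mxvec (\matrix_(i < n, j < m)
           (expR (vec_mx s i j) / \sum_(l < m) expR (vec_mx s i l))).

Definition fbar (R : realType) (n m : nat) (s : 'rV[R]_(n * m))
  : 'rV[R]_(n * m) :=
  blocksoftmax s - (m%:R)^-1 *: const_mx 1.

Definition dotv (R : realType) (k : nat) (u v : 'rV[R]_k) : R :=
  (u *m v^T) 0 0.

(* Main.v *)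
Require Import Defs.
From mathcomp Require Import all_boot all_order all_algebra.
From mathcomp Require Import all_classical all_reals all_analysis.
From mathcomp Require Import ring lra.
Import Order.TTheory GRing.Theory Num.Theory.
Local Open Scope ring_scope.

Section S.
Variable R : realType.
Lemma mono_from_deriv (g g' : R -> R) (t : R) :
  (forall x, is_derive x (1:R) g (g' x)) ->
  (forall x, 0 <= x -> 0 <= g' x) -> 0 <= t -> g 0 <= g t.
Proof.
move=> dg pos t0.
apply: (@ger0_derive1_ndecr R g 0 t) => //.
- move=> x; rewrite in_itv /= => /andP[x0 _].
  by rewrite derive1E (@derive_val _ _ _ _ _ _ _ (dg x)); apply: pos; apply: ltW.
- apply: derivable_within_continuous => x _.
  exact: (@ex_derive _ _ _ _ _ _ _ (dg x)).
Qed.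

Lemma g1_ge0 (t : R) : 0 <= t -> 0 <= 1 - expR t + t * expR t.
Proof.
move=> t0.
pose g := fun x : R => 1 - expR x + x * expR x.
have dg (x : R) : is_derive x (1:R) g (x * expR x).
  rewrite /g; apply: trigger_derive.
  rewrite /GRing.scale /=; lra.
have := @mono_from_deriv g _ t dg _ t0.
rewrite /g expR0 mul0r addr0 subrr; apply.
by move=> x x0; rewrite mulr_ge0 // expR_ge0.
Qed.

Lemma g2_ge0 (t : R) : 0 <= t -> 2 * (expR t - 1) <= t * (expR t + 1).
Proof.
move=> t0.
pose g := fun x : R => x * (expR x + 1) - 2 * (expR x - 1).
have dg (x : R) : is_derive x (1:R) g (1 - expR x + x * expR x).
  rewrite /g; apply: trigger_derive.
  rewrite /GRing.scale /=; lra.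
have := @mono_from_deriv g _ t dg g1_ge0 t0.
rewrite /g expR0 mul0r subrr mulr0 subrr subr_ge0; apply.
Qed.

Lemma sum5 (m : nat) (u v w z r : R) (x y : 'I_m -> R) :
  \sum_(k < m) (u + v * x k + w * y k + z * (y k * x k) + r * (x k ^+ 2)) =
  u *+ m + v * \sum_k x k + w * \sum_k y k + z * \sum_k (y k * x k)
  + r * \sum_k x k ^+ 2.
Proof.
by rewrite !big_split /= -!mulr_sumr sumr_const card_ord.
Qed.

Lemma double_sum (m : nat) (a p : 'I_m -> R) :
  (0 < m)%N -> \sum_k p k = 1 ->
  \sum_(j < m) \sum_(k < m) ((a j - a k) * (p j - p k) - 2 * (p j - p k) ^+ 2)
  = 2 * m%:R * (\sum_j a j * (p j - m%:R^-1) - 2 * \sum_j (p j - m%:R^-1) ^+ 2).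
Proof.
move=> m0 sp.
have mN : m%:R != 0 :> R by rewrite pnatr_eq0 -lt0n.
set Sa := \sum_k a k; set Sap := \sum_k a k * p k; set Spp := \sum_k p k ^+ 2.
have E1 j : \sum_(k < m) ((a j - a k) * (p j - p k) - 2 * (p j - p k) ^+ 2)
   = (a j * p j - 2 * p j ^+ 2) *+ m + (- a j + 4 * p j) * 1 + (- p j) * Sa
     + 1 * Sap + (-2) * Spp.
  transitivity (\sum_(k < m) ((a j * p j - 2 * p j ^+ 2) + (- a j + 4 * p j) * p k + (- p j) * a k
     + 1 * (a k * p k) + (-2) * p k ^+ 2)).
    by apply: eq_bigr => k _; ring.
  by rewrite sum5 sp.
rewrite (eq_bigr _ (fun j _ => E1 j)).
have -> : \sum_(j < m) ((a j * p j - 2 * p j ^+ 2) *+ m + (- a j + 4 * p j) * 1 + (- p j) * Sa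
     + 1 * Sap + (-2) * Spp) =
   \sum_(j < m) ((Sap - 2 * Spp) + (4 - Sa) * p j + (-1) * a j + m%:R * (a j * p j) + (- 2 * m%:R) * p j ^+ 2).
  apply: eq_bigr => j _; ring.
rewrite sum5 sp.
have -> : \sum_j a j * (p j - m%:R^-1) = \sum_(j < m) (0 + 0 * p j + (- m%:R^-1) * a j + 1 * (a j * p j) + 0 * p j ^+ 2).
  apply: eq_bigr => j _; ring.
have -> : \sum_j (p j - m%:R^-1) ^+ 2 = \sum_(j < m) (m%:R^-1 ^+ 2 + (-2 * m%:R^-1) * p j + 0 * a j + 0 * (a j * p j) + 1 * p j ^+ 2).
  apply: eq_bigr => j _; ring.
rewrite !sum5 sp -/Sa -/Sap -/Spp.
clear E1; clearbody Sa Sap Spp; by field.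
Qed.


Lemma keyK (a b : R) :
  2 * (expR a - expR b) ^+ 2 <= (a - b) * (expR a - expR b) * (expR a + expR b).
Proof.
wlog ba : a b / b <= a.
  move=> H; case: (leP b a) => [|/ltW ab]; first exact: H.
  have := H _ _ ab.
  have -> : (expR b - expR a) ^+ 2 = (expR a - expR b) ^+ 2 by ring.
  have -> : (b - a) * (expR b - expR a) * (expR b + expR a) =
            (a - b) * (expR a - expR b) * (expR a + expR b) by ring.
  by [].
set t := a - b.
have ha : expR a = expR b * expR t by rewrite -expRD /t addrC subrK.
have t0 : 0 <= t by rewrite subr_ge0.
have g := @g2_ge0 t t0.
have e1 : 1 <= expR t by rewrite -expR0 ler_expR.
have eb := expR_gt0 b.
rewrite ha -subr_ge0.
have -> : (t * (expR b * expR t - expR b) * (expR b * expR t + expR b) -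
   2 * (expR b * expR t - expR b) ^+ 2) =
   expR b ^+ 2 * (expR t - 1) * (t * (expR t + 1) - 2 * (expR t - 1)) by ring.
apply: mulr_ge0; first by apply: mulr_ge0; [apply: exprn_ge0; apply: ltW | rewrite subr_ge0].
by rewrite subr_ge0.
Qed.

Lemma keyM (a b : R) : 0 <= (a - b) * (expR a - expR b).
Proof.
case: (leP b a) => ab.
  by apply: mulr_ge0; rewrite subr_ge0 // ler_expR.
by apply: mulr_le0; rewrite subr_le0 ?ler_expR ltW.
Qed.

Lemma keyT (a b Z : R) : 0 < Z -> expR a + expR b <= Z ->
  0 <= (a - b) * (expR a / Z - expR b / Z) - 2 * (expR a / Z - expR b / Z) ^+ 2.
Proof.
move=> Z0 hZ.
have -> : (a - b) * (expR a / Z - expR b / Z) - 2 * (expR a / Z - expR b / Z) ^+ 2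
  = ((a - b) * (expR a - expR b) * Z - 2 * (expR a - expR b) ^+ 2) / Z ^+ 2.
  by field; rewrite gt_eqF.
apply: divr_ge0; last by apply: exprn_ge0; apply: ltW.
rewrite subr_ge0; apply: le_trans (keyK a b) _.
by apply: ler_wpM2l => //; apply: keyM.
Qed.

Lemma block (m : nat) (a : 'I_m -> R) : (0 < m)%N ->
  2 * \sum_j (expR (a j) / \sum_l expR (a l) - m%:R^-1) ^+ 2 <=
  \sum_j a j * (expR (a j) / \sum_l expR (a l) - m%:R^-1).
Proof.
move=> m0.
set Z := \sum_l expR (a l).
have Z0 : 0 < Z.
  rewrite /Z (bigD1 (Ordinal m0)) //=; apply: ltr_pwDl; first exact: expR_gt0.
  by apply: sumr_ge0 => i _; apply: expR_ge0.
pose p j := expR (a j) / Z.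
have sp : \sum_k p k = 1 by rewrite /p -mulr_suml divff // gt_eqF.
have := @double_sum m a p m0 sp.
idtac.
move=> E; rewrite /p in E.
rewrite -subr_ge0.
have m0' : 0 < 2 * m%:R :> R by rewrite mulr_gt0 // ltr0n.
rewrite -(pmulr_rge0 _ m0') -E.
apply: sumr_ge0 => j _; apply: sumr_ge0 => k _.
case: (eqVneq j k) => [->|jk]; first by rewrite !subrr mul0r expr0n /= mulr0 subrr.
apply: keyT => //.
rewrite /Z (bigD1 j) //= (bigD1 k) 1?eq_sym //= addrA lerDl.
by apply: sumr_ge0 => i _; apply: expR_ge0.
Qed.
End S.

Lemma dotv_mxvec (R : realType) (n m : nat) (A B : 'M[R]_(n, m)) :
  dotv (mxvec A) (mxvec B) = \sum_i \sum_j A i j * B i j.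
Proof.
rewrite /dotv !mxE (reindex _ (curry_mxvec_bij _ _)) /= pair_bigA.
by apply: eq_bigr => [[i j]] _ /=; rewrite !mxE !mxvecE.
Qed.

Lemma vec_fbar (R : realType) (n m : nat) (s : 'rV[R]_(n * m)) :
  fbar s = mxvec (\matrix_(i < n, j < m)
     (expR (vec_mx s i j) / \sum_(l < m) expR (vec_mx s i l) - m%:R^-1)).
Proof.
apply: (can_inj vec_mxK); rewrite mxvecK /fbar /blocksoftmax linearB linearZ /= mxvecK.
apply/matrixP => i j; rewrite !mxE.
by rewrite mulr1.
Qed.

Theorem lemma1 (R : realType) (n m : nat) (hn : (1 <= n)%N) (hm : (2 <= m)%N)
  (s : 'rV[R]_(n * m)) :
  2 * dotv (fbar s) (fbar s) <= dotv s (fbar s) /\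
  0 <= 2 * dotv (fbar s) (fbar s).
Proof.
have m0 : (0 < m)%N by apply: leq_trans hm.
rewrite vec_fbar dotv_mxvec -[X in dotv X _]vec_mxK dotv_mxvec.
split.
  rewrite mulr_sumr; apply: ler_sum => i _.
  have H := @block R m (fun j => vec_mx s i j) m0.
  apply: le_trans (le_trans _ H) _; rewrite le_eqVlt; apply/orP; left; apply/eqP.
    by congr (_ * _); apply: eq_bigr => j _; rewrite !mxE expr2.
  by apply: eq_bigr => j _; rewrite !mxE.
apply: mulr_ge0 => //; apply: sumr_ge0 => i _; apply: sumr_ge0 => j _.
by rewrite -expr2 sqr_ge0.
Qed.
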